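(* Let $N, M, n$ be integers with $0 \le M \le N$ and $1 \le n \le N$. Draw $n$ individuals uniformly at random without replacement from a population of $N$ individuals, of which exactly $M$ are positive, and let $i$ be the number of positive individuals among the $n$ drawn. Let $0<\delta<1$ and $c>0$, and put $x = (N/c)^2 > 0$ and $y = -\frac{1}{2}\ln(\delta/2) > 0$. Then with probability at least $1-\delta$ we have $M \in \big[\tfrac{i}{n}N - c,\ \tfrac{i}{n}N + c\big]$, provided that (S1) $n \ge \frac{(N+1)xy}{N+xy}$, in the case $N \le \frac{c^2}{y} - 2$; or (S2) $n \ge \frac{(N-1)xy}{2(N+xy)} + \sqrt{\Big(\frac{(N-1)xy}{2(N+xy)}\Big)^2 + \frac{Nxy}{N+xy}}$, in the case $N > \frac{c^2}{y} - 2$. Moreover, $\frac{(N-1)xy}{2(N+xy)} + \sqrt{\Big(\frac{(N-1)xy}{2(N+xy)}\Big)^2 + \frac{Nxy}{N+xy}} \ge \frac{Nxy}{N+xy}$.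
   Context: $i$ has the hypergeometric distribution: $\mathbb{P}[i=k] = \binom{M}{k}\binom{N-M}{n-k}/\binom{N}{n}$. $M$ is fixed (unknown) and the probability is over the random sample. *)

(* Defs.v *)
From HB Require Import structures.
From mathcomp Require Import all_boot all_order all_algebra.
From mathcomp Require Import reals exp.
Set Implicit Arguments. Unset Strict Implicit. Unset Printing Implicit Defensive.
Import Order.TTheory GRing.Theory Num.Theory.
Local Open Scope ring_scope.

Definition hyper_pmf (R : realType) (N M n k : nat) : R :=
  ('C(M, k) * 'C(N - M, n - k))%:R / ('C(N, n))%:R.

Definition covers (R : realType) (N M n : nat) (c : R) (k : nat) : bool :=
  (k%:R / n%:R * N%:R - c <= M%:R) && (M%:R <= k%:R / n%:R * N%:R + c).

(* P[ M \in [ (i/n) N - c, (i/n) N + c ] ] where i is hypergeometric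
   (the support of i is contained in {0,...,n}). *)
Definition prob_covers (R : realType) (N M n : nat) (c : R) : R :=
  \sum_(k < n.+1) (if covers N M n c k then hyper_pmf R N M n k else 0).

(* Main.v *)
Require Import Defs.
From HB Require Import structures.
From mathcomp Require Import all_boot all_order all_algebra.
From mathcomp Require Import reals exp.
From mathcomp Require Import all_classical all_reals all_analysis.
From mathcomp Require Import zify ring lra.
Set Implicit Arguments. Unset Strict Implicit. Unset Printing Implicit Defensive.
Import Order.TTheory GRing.Theory Num.Theory.
Import numFieldNormedType.Exports.
Lemma natB (N M n k : nat) : (k <= n)%N -> (M <= N.+1)%N ->
 (M * 'C(M.-1, k) * 'C(N - M.-1, n - k) + (N.+1 - M) * ('C(M, k) * 'C(N - M, n - k))
  = (N.+1 - n) * ('C(M, k) * 'C(N.+1 - M, n - k)))%N.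
Proof.
move=> kn MN.
rewrite mul_bin_down.
have -> : (N - M = (N.+1 - M).-1)%N by lia.
rewrite [X in _ + X]mulnCA mul_bin_down.
have [Mk|kM] := ltnP M k.
  by rewrite (bin_small Mk) !(mul0n, muln0).
have [M0|M0] := eqVneq M 0%N.
  subst M; have k0 : k = 0%N by lia.
  subst k; rewrite !subn0 !mul0n add0n bin0 !mul1n.
  have [big|small] := ltnP N.+1 n; first by rewrite bin_small // muln0.
  rewrite mulnC; congr (_ * _)%N; lia.
have -> : (N - M.-1 = N.+1 - M)%N by lia.
have [big|small] := ltnP (N.+1 - M) (n - k).
  by rewrite (bin_small big) !(mul0n, muln0).
have e : ((M - k) + (N.+1 - M - (n - k)) = N.+1 - n)%N by lia.
move: ('C(M, k)) ('C(N.+1 - M, n - k)) => a b.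
rewrite -e mulnDl; congr (_ + _)%N; first by rewrite mulnA.
by rewrite mulnCA.
Qed.

Lemma natA (N M m k : nat) : (k < m)%N -> (M <= N.+1)%N ->
 (M * 'C(M.-1, k) * 'C(N - M.-1, m - k) + (N.+1 - M) * ('C(M, k.+1) * 'C(N - M, m - k.+1))
  = m.+1 * ('C(M, k.+1) * 'C(N.+1 - M, m - k)))%N.
Proof.
move=> km MN.
rewrite mul_bin_diag.
have -> : (N - M = (N.+1 - M).-1)%N by lia.
rewrite [X in _ + X]mulnCA mul_bin_diag.
have -> : ((m - k.+1).+1 = m - k)%N by lia.
have [M0|M0] := eqVneq M 0%N.
  by subst M; rewrite bin0n /= !(mul0n, muln0).
have -> : (N - M.-1 = N.+1 - M)%N by lia.
have e : (k.+1 + (m - k) = m.+1)%N by lia.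
move: ('C(M, k.+1)) ('C(N.+1 - M, m - k)) => a b.
rewrite -e mulnDl; congr (_ + _)%N; first by rewrite mulnA.
by rewrite mulnCA.
Qed.

Lemma natA_last (N M m : nat) : (M <= N.+1)%N ->
 (M * 'C(M.-1, m) * 'C(N - M.-1, m - m) = m.+1 * ('C(M, m.+1) * 'C(N.+1 - M, m - m)))%N.
Proof. by move=> _; rewrite subnn !bin0 !muln1 mul_bin_diag. Qed.

Lemma natA_head (N M m : nat) :
 ((N.+1 - M) * 'C(N - M, m) = m.+1 * 'C(N.+1 - M, m.+1))%N.
Proof.
have -> : (N - M = (N.+1 - M).-1)%N by lia.
by rewrite mul_bin_diag.
Qed.

Local Open Scope classical_set_scope.
Local Open Scope ring_scope.
Section H.
Variable R : realType.

Lemma mvt_ge (f df : R -> R) (s : R) : (forall x : R, is_derive x 1 f (df x)) ->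
  (forall x, 0 <= x -> 0 <= df x) -> 0 <= s -> f 0 <= f s.
Proof.
move=> H dpos s0.
have cont : {within `[0, s], continuous f}.
  apply/continuous_subspaceT => x.
  apply/differentiable_continuous/derivable1_diffP; have := H x; by case.
have [c cin E] := MVT_segment s0 (fun x _ => H x) cont.
rewrite -subr_ge0 E subr0 mulr_ge0 // dpos //.
by move: cin; rewrite in_itv /= => /andP[].
Qed.

Lemma dg (p x : R) : is_derive x 1 (fun s : R => 1 - p + p * expR s) (p * expR x).
Proof.
have := @is_deriveD R R R (cst (1 - p)) (p *: expR) x 1 0 (p *: expR x) _ _.
rewrite add0r; apply => //; exact: is_deriveZ.
Qed.

Lemma dpoly (p x : R) : is_derive x 1 (fun s : R => p * s + 8^-1 * (s * s)) (p + x / 4).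
Proof.
have h1 : is_derive x 1 (p *: @id R) (p *: 1) by exact: is_deriveZ.
have h2 : is_derive x 1 (@id R * id) (x *: 1 + x *: 1) by exact: is_deriveM.
have h3 := is_deriveZ (8^-1 : R) h2.
have h4 := is_deriveD h1 h3.
change (is_derive x 1 (p *: @id R + (8^-1 : R) *: (@id R * id)) (p + x / 4)).
apply: (is_derive_eq h4). change ((p * 1) + 8^-1 * (x * 1 + x * 1) = p + x / 4). by field.
Qed.

Lemma D_gt0 (p x : R) : 0 <= p <= 1 -> 0 < 1 - p + p * expR x.
Proof.
move=> /andP[p0 p1]; have e0 := expR_gt0 x.
have [->|pn1] := eqVneq p 1; first by rewrite subrr add0r mul1r.
have : p < 1 by rewrite lt_neqAle pn1.
move=> plt; have : 0 <= p * expR x by rewrite mulr_ge0 // ltW.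
lra.
Qed.

Lemma dL (p x : R) : 0 <= p <= 1 ->
  is_derive x 1 (fun s : R => ln (1 - p + p * expR s)) ((1 - p + p * expR x)^-1 * (p * expR x)).
Proof.
move=> hp.
have h1 := dg p x.
have h2 : is_derive (1 - p + p * expR x) 1 (@ln R) (1 - p + p * expR x)^-1.
  exact: is_derive1_ln (D_gt0 x hp).
have h3 := @is_derive1_comp R (@ln R) (fun s : R => 1 - p + p * expR s) x _ _ h2 h1.
change (is_derive x 1 (@ln R \o (fun s : R => 1 - p + p * expR s)) ((1 - p + p * expR x)^-1 * (p * expR x))).
exact: h3.
Qed.

Lemma dh (p x : R) : 0 <= p <= 1 ->
  is_derive x 1 (fun s : R => p * s + 8^-1 * (s * s) - ln (1 - p + p * expR s))
    (p + 4^-1 * x - p * expR x * (1 - p + p * expR x)^-1).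
Proof.
move=> hp.
have h := is_deriveB (dpoly p x) (dL x hp).
apply: (is_derive_eq h).
by rewrite mulrC [X in _ - X]mulrC.
Qed.

Lemma dh' (p x : R) : 0 <= p <= 1 ->
  is_derive x 1 (fun s : R => p + 4^-1 * s - p * expR s * (1 - p + p * expR s)^-1)
    (4^-1 - p * (1 - p) * expR x / (1 - p + p * expR x) ^+ 2).
Proof.
move=> hp.
have hD := dg p x.
have hV := is_deriveV (f := fun s : R => 1 - p + p * expR s) (lt0r_neq0 (D_gt0 x hp)) hD.
have hE : is_derive x 1 (p *: (expR : R -> R)) (p *: expR x) by exact: is_deriveZ.
have hM := is_deriveM hE hV.
have hl : is_derive x 1 (cst p + (4^-1 : R) *: (@id R)) (0 + 4^-1 *: 1).
  apply: is_deriveD => //; exact: is_deriveZ.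
have h := is_deriveB hl hM.
apply: (is_derive_eq h).
change (0 + 4^-1 * 1 - (p * expR x * (- (1 - p + p * expR x) ^- 2 * (p * expR x))
   + (1 - p + p * expR x)^-1 * (p * expR x)) = 
   4^-1 - p * (1 - p) * expR x / (1 - p + p * expR x) ^+ 2).
have dn := lt0r_neq0 (D_gt0 x hp).
by field.
Qed.

Lemma hoeff_ln (p s : R) : 0 <= p <= 1 -> 0 <= s ->
  ln (1 - p + p * expR s) <= p * s + 8^-1 * (s * s).
Proof.
move=> hp s0.
have h'0 : forall t : R, 0 <= t -> 0 <= p + 4^-1 * t - p * expR t * (1 - p + p * expR t)^-1.
  move=> t t0.
  have := @mvt_ge (fun s : R => p + 4^-1 * s - p * expR s * (1 - p + p * expR s)^-1) _ t
     (fun x => dh' x hp) _ t0.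
  rewrite /= expR0 mulr0 addr0 mulr1 subrK invr1 mulr1 subrr; apply.
  move=> x _; have dp := D_gt0 x hp.
  rewrite subr_ge0 ler_pdivrMr; last by rewrite exprn_gt0.
  move: hp => /andP[p0 p1]; have e0 := expR_gt0 x.
  set e := expR x in dp *.
  have : 0 <= (1 - p - p * e) ^+ 2 by exact: sqr_ge0.
  nra.
have := @mvt_ge (fun s : R => p * s + 8^-1 * (s * s) - ln (1 - p + p * expR s)) _ s
     (fun x => dh x hp) h'0 s0.
by rewrite /= !mulr0 addr0 expR0 mulr1 subrK ln1 subr0 subr_ge0.
Qed.

Lemma hoeff (p s : R) : 0 <= p <= 1 ->
  p * expR ((1 - p) * s) + (1 - p) * expR (- (p * s)) <= expR (8^-1 * (s * s)).
Proof.
wlog s0 : p s / 0 <= s.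
  move=> W hp; have [s0|s0] := lerP 0 s; first exact: W.
  have hp' : 0 <= 1 - p <= 1 by move: hp => /andP[? ?]; apply/andP; split; lra.
  have := W (1 - p) (- s) _ hp'.
  move=> H.
  have -> : p * expR ((1 - p) * s) + (1 - p) * expR (- (p * s)) =
     (1 - p) * expR ((1 - (1 - p)) * - s) + (1 - (1 - p)) * expR (- ((1 - p) * - s)).
    by rewrite addrC; congr (_ * expR _ + _ * expR _); ring.
  by move: H; rewrite mulrNN; apply; lra.
move=> hp.
have := hoeff_ln hp s0.
have dp := D_gt0 s hp.
rewrite -ler_expR lnK ?posrE //.
move=> H.
have -> : p * expR ((1 - p) * s) + (1 - p) * expR (- (p * s)) =
   expR (- (p * s)) * (1 - p + p * expR s).
  rewrite mulrBl mul1r expRD; ring.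
have -> : expR (8^-1 * (s * s)) = expR (- (p * s)) * expR (p * s + 8^-1 * (s * s)).
  by rewrite -expRD addKr.
by rewrite ler_pM2l ?expR_gt0.
Qed.
End H.
Section Rec.
Variable R : realType.

Lemma binR_neq0 (a b : nat) : (b <= a)%N -> ('C(a, b)%:R : R) != 0.
Proof. by move=> h; rewrite pnatr_eq0 -lt0n bin_gt0. Qed.

Lemma recB (N M n k : nat) : (n <= N)%N -> (M <= N.+1)%N -> (k <= n)%N ->
  hyper_pmf R N.+1 M n k = M%:R / N.+1%:R * hyper_pmf R N M.-1 n k
     + (1 - M%:R / N.+1%:R) * hyper_pmf R N M n k.
Proof.
move=> nN MN kn.
rewrite /hyper_pmf.
have cN := binR_neq0 nN.
have cN1 : ('C(N.+1, n)%:R : R) != 0 by apply: binR_neq0; lia.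
have Nn : ((N.+1 - n)%:R : R) != 0 by rewrite pnatr_eq0; lia.
have N1 : (N.+1%:R : R) != 0 by rewrite pnatr_eq0.
have H1 := congr1 (fun x : nat => (x%:R : R)) (natB kn MN).
have H2' : (N.+1 * 'C(N, n) = (N.+1 - n) * 'C(N.+1, n))%N := mul_bin_down N.+1 n.
have H2 : (N.+1%:R * 'C(N, n)%:R : R) = (N.+1 - n)%:R * 'C(N.+1, n)%:R.
  by rewrite -!natrM H2'.
rewrite !natrD !natrM in H1.
have e : 1 - (M%:R : R) / N.+1%:R = (N.+1 - M)%:R / N.+1%:R.
  by rewrite natrB // mulrBl divff.
rewrite e.
rewrite [RHS](_ : _ = ((M%:R * 'C(M.-1, k)%:R * 'C(N - M.-1, n - k)%:R +
    (N.+1 - M)%:R * ('C(M, k)%:R * 'C(N - M, n - k)%:R)) / (N.+1%:R * 'C(N, n)%:R))); last first.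
  rewrite !natrM; field; rewrite ?nat1r; apply/andP; split => //.
rewrite H1 H2.
by field; rewrite cN1 Nn.
Qed.

Lemma den_A (N m : nat) : (N.+1%:R * 'C(N, m)%:R : R) = m.+1%:R * 'C(N.+1, m.+1)%:R.
Proof.
have H : (N.+1 * 'C(N, m) = m.+1 * 'C(N.+1, m.+1))%N := mul_bin_diag N.+1 m.
by rewrite -!natrM H.
Qed.

Lemma oneB (N M : nat) : (M <= N.+1)%N ->
  1 - (M%:R : R) / N.+1%:R = (N.+1 - M)%:R / N.+1%:R.
Proof. by move=> MN; rewrite natrB // mulrBl divff // pnatr_eq0. Qed.

Lemma recA (N M m k : nat) : (m <= N)%N -> (M <= N.+1)%N -> (k < m)%N ->
  hyper_pmf R N.+1 M m.+1 k.+1 = M%:R / N.+1%:R * hyper_pmf R N M.-1 m k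
     + (1 - M%:R / N.+1%:R) * hyper_pmf R N M m k.+1.
Proof.
move=> mN MN km.
rewrite /hyper_pmf subSS oneB //.
have cN := binR_neq0 mN.
have cN1 : ('C(N.+1, m.+1)%:R : R) != 0 by apply: binR_neq0; lia.
have N1 : (N.+1%:R : R) != 0 by rewrite pnatr_eq0.
have m1 : (m.+1%:R : R) != 0 by rewrite pnatr_eq0.
have H1 := congr1 (fun x : nat => (x%:R : R)) (natA km MN).
rewrite !natrD !natrM in H1.
rewrite [RHS](_ : _ = ((M%:R * 'C(M.-1, k)%:R * 'C(N - M.-1, m - k)%:R +
    (N.+1 - M)%:R * ('C(M, k.+1)%:R * 'C(N - M, m - k.+1)%:R)) / (N.+1%:R * 'C(N, m)%:R))); last first.
  by rewrite !natrM; field; rewrite ?nat1r ?N1 ?cN.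
rewrite H1 den_A.
by field; rewrite ?nat1r ?cN1 ?m1.
Qed.

Lemma recA_last (N M m : nat) : (m <= N)%N -> (M <= N.+1)%N ->
  hyper_pmf R N.+1 M m.+1 m.+1 = M%:R / N.+1%:R * hyper_pmf R N M.-1 m m.
Proof.
move=> mN MN.
rewrite /hyper_pmf subSS.
have cN := binR_neq0 mN.
have cN1 : ('C(N.+1, m.+1)%:R : R) != 0 by apply: binR_neq0; lia.
have N1 : (N.+1%:R : R) != 0 by rewrite pnatr_eq0.
have m1 : (m.+1%:R : R) != 0 by rewrite pnatr_eq0.
have H1 := congr1 (fun x : nat => (x%:R : R)) (@natA_last N M m MN).
rewrite !natrM in H1.
rewrite [RHS](_ : _ = (M%:R * 'C(M.-1, m)%:R * 'C(N - M.-1, m - m)%:R) / (N.+1%:R * 'C(N, m)%:R)); last first.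
  by rewrite !natrM; field; rewrite ?nat1r ?N1 ?cN.
rewrite H1 den_A.
by rewrite natrM; field; rewrite ?nat1r ?cN1 ?m1.
Qed.

Lemma recA_head (N M m : nat) : (m <= N)%N -> (M <= N.+1)%N ->
  hyper_pmf R N.+1 M m.+1 0 = (1 - M%:R / N.+1%:R) * hyper_pmf R N M m 0.
Proof.
move=> mN MN.
rewrite /hyper_pmf !subn0 !bin0 !mul1n oneB //.
have cN := binR_neq0 mN.
have cN1 : ('C(N.+1, m.+1)%:R : R) != 0 by apply: binR_neq0; lia.
have N1 : (N.+1%:R : R) != 0 by rewrite pnatr_eq0.
have m1 : (m.+1%:R : R) != 0 by rewrite pnatr_eq0.
have H1 := congr1 (fun x : nat => (x%:R : R)) (@natA_head N M m).
rewrite !natrM in H1.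
rewrite [RHS](_ : _ = ((N.+1 - M)%:R * 'C(N - M, m)%:R) / (N.+1%:R * 'C(N, m)%:R)); last first.
  by field; rewrite ?nat1r ?N1 ?cN.
rewrite H1 den_A.
by field; rewrite ?nat1r ?cN1 ?m1.
Qed.
End Rec.

Section S.
Variable R : realType.

Lemma sumA (N M m : nat) (f : nat -> R) : (m <= N)%N -> (M <= N.+1)%N ->
 \sum_(0 <= k < m.+2) hyper_pmf R N.+1 M m.+1 k * f k =
   M%:R / N.+1%:R * \sum_(0 <= k < m.+1) hyper_pmf R N M.-1 m k * f k.+1
   + (1 - M%:R / N.+1%:R) * \sum_(0 <= k < m.+1) hyper_pmf R N M m k * f k.
Proof.
move=> mN MN.
rewrite big_nat_recl // [X in _ = _ + _ * X]big_nat_recl //.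
rewrite big_nat_recr //= [X in _ = _ * X + _]big_nat_recr //=.
rewrite recA_head // recA_last //.
have E : \sum_(0 <= i < m) hyper_pmf R N.+1 M m.+1 i.+1 * f i.+1 =
   M%:R / N.+1%:R * \sum_(0 <= i < m) hyper_pmf R N M.-1 m i * f i.+1
   + (1 - M%:R / N.+1%:R) * \sum_(0 <= i < m) hyper_pmf R N M m i.+1 * f i.+1.
  rewrite !big_distrr -big_split; apply: eq_big_nat => i /andP[_ im].
  by rewrite recA //= mulrDl !mulrA.
rewrite E; ring.
Qed.

Lemma sumB (N M n : nat) (f : nat -> R) : (n <= N)%N -> (M <= N.+1)%N ->
 \sum_(0 <= k < n.+1) hyper_pmf R N.+1 M n k * f k =
   M%:R / N.+1%:R * \sum_(0 <= k < n.+1) hyper_pmf R N M.-1 n k * f k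
   + (1 - M%:R / N.+1%:R) * \sum_(0 <= k < n.+1) hyper_pmf R N M n k * f k.
Proof.
move=> nN MN.
rewrite !big_distrr -big_split; apply: eq_big_nat => i /andP[_ im].
by rewrite recB //= mulrDl !mulrA.
Qed.

Lemma hyp_ge0 (N M n k : nat) : 0 <= hyper_pmf R N M n k.
Proof. by rewrite /hyper_pmf divr_ge0. Qed.

Lemma sum_hyp (m N M : nat) : (m <= N)%N -> (M <= N)%N ->
  \sum_(0 <= k < m.+1) hyper_pmf R N M m k = 1.
Proof.
elim: m N M => [|m IH] N M mN MN.
  by rewrite big_nat1 /hyper_pmf !subn0 !bin0 mul1n divr1.
case: N mN MN => [//|N] mN MN.
have mN' : (m <= N)%N by lia.
have := @sumA N M m (fun _ => 1) mN' MN.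
rewrite !(eq_bigr _ (fun i _ => mulr1 _)) => ->.
have [MeN|MneN] := eqVneq M N.+1.
  subst M; rewrite divff ?pnatr_eq0 // subrr mul0r addr0 mul1r IH //.
rewrite !IH //; try lia.
by rewrite !mulr1 addrC subrK.
Qed.

Lemma Vstep (m N : R) : 0 <= m -> m <= N ->
  m * (N - m + 1) / N + ((N - m) / N) ^+ 2 <= (m + 1) * (N - m + 1) / (N + 1).
Proof.
move=> m0 mN.
have [N0|Npos] := eqVneq N 0.
  have m0' : m = 0 by lra.
  by rewrite N0 m0' !(subrr, mul0r, add0r, invr0, mulr0, expr0n) /= mul1r divr1 ler01.
have N0 : 0 < N by rewrite lt_def Npos /=; lra.
have N10 : N + 1 != 0 by rewrite gt_eqF //; lra.
set a := N - m.
have key : (m + 1) * (N - m + 1) / (N + 1) - (m * (N - m + 1) / N + ((N - m) / N) ^+ 2)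
   = (N - m) * m / (N ^+ 2 * (N + 1)).
  by field; rewrite Npos N10.
rewrite -subr_ge0 key divr_ge0 //.
  by rewrite mulr_ge0 //; lra.
by rewrite mulr_ge0 ?sqr_ge0 //; lra.
Qed.

Lemma expA1 (N m M k : nat) (t : R) : (m <= N)%N -> (1 <= M)%N -> (M <= N.+1)%N ->
  t * (k.+1%:R - m.+1%:R * M%:R / N.+1%:R) =
  t * (k%:R - m%:R * (M.-1)%:R / N%:R) + (1 - M%:R / N.+1%:R) * (t * ((N%:R - m%:R) / N%:R)).
Proof.
move=> mN M1 MN.
case: N mN MN => [|N] mN MN.
  have m0 : m = 0%N by lia.
  have M1' : M = 1%N by lia.
  subst; rewrite /= !(mul0r, mulr0, subr0, add0r, addr0, mul1r, divr1).
  by rewrite -natr1 addrK.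
have -> : (M.-1)%:R = M%:R - 1 :> R by rewrite -[in RHS](prednK M1) -natr1 addrK.
rewrite -!natr1.
by field; rewrite ?nat1r; apply/andP; split; rewrite ?pnatr_eq0 //; rewrite -natr1 -?natrD pnatr_eq0 ?addn1.
Qed.


Lemma expA0 (N m M k : nat) (t : R) : (m <= N)%N -> (M <= N)%N ->
  t * (k%:R - m.+1%:R * M%:R / N.+1%:R) =
  t * (k%:R - m%:R * M%:R / N%:R) + - (M%:R / N.+1%:R * (t * ((N%:R - m%:R) / N%:R))).
Proof.
move=> mN MN.
case: N mN MN => [|N] mN MN.
  have m0 : m = 0%N by lia.
  have M0 : M = 0%N by lia.
  by subst; rewrite /= !(mul0r, mulr0, subr0, add0r, addr0, oppr0).
rewrite -!natr1.
by field; rewrite ?nat1r; apply/andP; split; rewrite ?pnatr_eq0 //; rewrite -natr1 -?natrD pnatr_eq0 ?addn1.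
Qed.

Definition V (m N : nat) : R := m%:R * (N%:R - m%:R + 1) / N%:R.
Arguments V : simpl never.

Lemma mgfA (m N M : nat) (t : R) : (m <= N)%N -> (M <= N)%N ->
  \sum_(0 <= k < m.+1) hyper_pmf R N M m k * expR (t * (k%:R - m%:R * M%:R / N%:R))
   <= expR (8^-1 * (t * t) * V m N).
Proof.
elim: m N M => [|m IH] N M mN MN.
  rewrite big_nat1 /hyper_pmf !subn0 !bin0 mul1n divr1 /V.
  by rewrite !(mul0r, subrr, mulr0, mul1r).
case: N mN MN => [//|N] mN MN.
have mN' : (m <= N)%N by lia.
rewrite (@sumA N M m (fun k => expR (t * (k%:R - m.+1%:R * M%:R / N.+1%:R))) mN' MN).
set mu := M%:R / N.+1%:R.
set s := t * ((N%:R - m%:R) / N%:R).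
set B := expR (8^-1 * (t * t) * V m N).
have mu01 : 0 <= mu <= 1.
  rewrite /mu divr_ge0 //= ler_pdivrMr ?ltr0Sn // mul1r ler_nat //.
have T1 : mu * \sum_(0 <= k < m.+1) hyper_pmf R N M.-1 m k *
      expR (t * (k.+1%:R - m.+1%:R * M%:R / N.+1%:R)) <= mu * (expR ((1 - mu) * s) * B).
  have [M0|M0] := eqVneq M 0%N.
    by rewrite /mu M0 !mul0r.
  rewrite ler_wpM2l //; first by case/andP: mu01.
  rewrite (eq_big_nat _ _ (fun k _ => congr1 (fun x => _ * expR x) (expA1 k t mN' _ MN))); last by lia.
  under eq_big_nat => k _ do rewrite expRD mulrA.
  rewrite -big_distrl /= mulrC ler_wpM2l ?expR_ge0 //.
  apply: IH => //; lia.
have T0 : (1 - mu) * \sum_(0 <= k < m.+1) hyper_pmf R N M m k *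
      expR (t * (k%:R - m.+1%:R * M%:R / N.+1%:R)) <= (1 - mu) * (expR (- (mu * s)) * B).
  have [MN1|MN1] := eqVneq M N.+1.
    by rewrite /mu MN1 divff ?pnatr_eq0 // subrr !mul0r.
  rewrite ler_wpM2l //; first by case/andP: mu01; lra.
  have MN' : (M <= N)%N by lia.
  rewrite (eq_big_nat _ _ (fun k _ => congr1 (fun x => _ * expR x) (expA0 k t mN' MN'))).
  under eq_big_nat => k _ do rewrite expRD mulrA.
  rewrite -big_distrl /= mulrC ler_wpM2l ?expR_ge0 //.
  exact: IH.
apply: le_trans (lerD T1 T0) _.
have -> : mu * (expR ((1 - mu) * s) * B) + (1 - mu) * (expR (- (mu * s)) * B) =
   (mu * expR ((1 - mu) * s) + (1 - mu) * expR (- (mu * s))) * B by ring.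
apply: le_trans (ler_wpM2r (expR_ge0 _) (hoeff s mu01)) _.
rewrite /B -expRD ler_expR /s.
set a := (N%:R - m%:R) / N%:R.
have -> : 8^-1 * (t * a * (t * a)) + 8^-1 * (t * t) * V m N = 8^-1 * (t * t) * (V m N + a ^+ 2) by ring.
rewrite ler_wpM2l //; first by apply: mulr_ge0; [rewrite invr_ge0 ler0n | rewrite -expr2 sqr_ge0].
rewrite /V /a -!natr1.
have -> : N%:R + 1 - (m%:R + 1) + 1 = N%:R - m%:R + 1 :> R by ring.
apply: Vstep; first exact: ler0n.
by rewrite ler_nat.
Qed.



Lemma expB1 (N n M k : nat) (t : R) : (0 < N)%N -> (1 <= M)%N ->
  t * (k%:R - n%:R * M%:R / N.+1%:R) =
  t * (k%:R - n%:R * (M.-1)%:R / N%:R) + (1 - M%:R / N.+1%:R) * - (t * (n%:R / N%:R)).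
Proof.
move=> N0 M1.
have -> : (M.-1)%:R = M%:R - 1 :> R by rewrite -[in RHS](prednK M1) -natr1 addrK.
case: N N0 => [//|N] _.
rewrite -!natr1.
by field; rewrite ?nat1r; apply/andP; split; rewrite ?pnatr_eq0 //; rewrite -natr1 -?natrD pnatr_eq0 ?addn1.
Qed.

Lemma expB0 (N n M k : nat) (t : R) : (0 < N)%N ->
  t * (k%:R - n%:R * M%:R / N.+1%:R) =
  t * (k%:R - n%:R * M%:R / N%:R) + - (M%:R / N.+1%:R * - (t * (n%:R / N%:R))).
Proof.
move=> N0.
case: N N0 => [//|N] _.
rewrite -!natr1.
by field; rewrite ?nat1r; apply/andP; split; rewrite ?pnatr_eq0 //; rewrite -natr1 -?natrD pnatr_eq0 ?addn1.
Qed.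

Lemma hyp_diag (n M k : nat) : (M <= n)%N -> (k <= n)%N -> k != M ->
  hyper_pmf R n M n k = 0.
Proof.
move=> Mn kn kM; rewrite /hyper_pmf.
have [kM'|Mk] := ltnP k M.
  by rewrite (@bin_small (n - M) (n - k)) ?muln0 ?mul0r //; lia.
have Mk' : (M < k)%N by rewrite ltn_neqAle eq_sym kM Mk.
by rewrite (bin_small Mk') mul0n mul0r.
Qed.

Lemma mgfB (d n M : nat) (t : R) : (0 < n)%N -> (M <= n + d)%N ->
  \sum_(0 <= k < n.+1) hyper_pmf R (n + d) M n k * expR (t * (k%:R - n%:R * M%:R / (n + d)%:R))
   <= expR (8^-1 * (t * t) * V d (n + d)).
Proof.
move=> n0; elim: d M => [|d IH] M MN.
  rewrite addn0 in MN *.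
  rewrite /V !(mul0r, mulr0, expR0).
  rewrite (eq_big_nat _ _ (F2 := fun k => hyper_pmf R n M n k)).
    by rewrite sum_hyp.
  move=> k /andP[_ kn].
  have [->|kM] := eqVneq k M.
    rewrite [n%:R * M%:R / n%:R]mulrAC divff ?mul1r ?subrr ?mulr0 ?expR0 ?mulr1 //.
    by rewrite pnatr_eq0 -lt0n.
  by rewrite hyp_diag // mul0r.
rewrite addnS in MN *.
have nN : (n <= n + d)%N by rewrite leq_addr.
rewrite (@sumB (n + d) M n (fun k => expR (t * (k%:R - n%:R * M%:R / (n + d).+1%:R))) nN MN).
set mu := M%:R / (n + d).+1%:R.
set s := - (t * (n%:R / (n + d)%:R)).
set B := expR (8^-1 * (t * t) * V d (n + d)).
have N0 : (0 < n + d)%N by lia.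
have mu01 : 0 <= mu <= 1.
  rewrite /mu divr_ge0 //= ler_pdivrMr ?ltr0Sn // mul1r ler_nat //.
have T1 : mu * \sum_(0 <= k < n.+1) hyper_pmf R (n + d) M.-1 n k *
      expR (t * (k%:R - n%:R * M%:R / (n + d).+1%:R)) <= mu * (expR ((1 - mu) * s) * B).
  have [M0|M0] := eqVneq M 0%N.
    by rewrite /mu M0 !mul0r.
  rewrite ler_wpM2l //; first by case/andP: mu01.
  rewrite (eq_big_nat _ _ (fun k _ => congr1 (fun x => _ * expR x) (@expB1 (n + d) n M k t N0 _))); last by lia.
  under eq_big_nat => k _ do rewrite expRD mulrA.
  rewrite -big_distrl /= mulrC ler_wpM2l ?expR_ge0 //.
  apply: IH => //; lia.
have T0 : (1 - mu) * \sum_(0 <= k < n.+1) hyper_pmf R (n + d) M n k *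
      expR (t * (k%:R - n%:R * M%:R / (n + d).+1%:R)) <= (1 - mu) * (expR (- (mu * s)) * B).
  have [MN1|MN1] := eqVneq M (n + d).+1.
    by rewrite /mu MN1 divff ?pnatr_eq0 // subrr !mul0r.
  rewrite ler_wpM2l //; first by case/andP: mu01; lra.
  have MN' : (M <= n + d)%N by lia.
  rewrite (eq_big_nat _ _ (fun k _ => congr1 (fun x => _ * expR x) (@expB0 (n + d) n M k t N0))).
  under eq_big_nat => k _ do rewrite expRD mulrA.
  rewrite -big_distrl /= mulrC ler_wpM2l ?expR_ge0 //.
  exact: IH.
apply: le_trans (lerD T1 T0) _.
have -> : mu * (expR ((1 - mu) * s) * B) + (1 - mu) * (expR (- (mu * s)) * B) =
   (mu * expR ((1 - mu) * s) + (1 - mu) * expR (- (mu * s))) * B by ring.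
apply: le_trans (ler_wpM2r (expR_ge0 _) (hoeff s mu01)) _.
rewrite /B -expRD ler_expR /s.
set a := n%:R / (n + d)%:R.
have -> : 8^-1 * (- (t * a) * - (t * a)) + 8^-1 * (t * t) * V d (n + d) = 8^-1 * (t * t) * (V d (n + d) + a ^+ 2) by ring.
rewrite ler_wpM2l //; first by apply: mulr_ge0; [rewrite invr_ge0 ler0n | rewrite -expr2 sqr_ge0].
have -> : a = ((n + d)%:R - d%:R) / (n + d)%:R by rewrite /a natrD addrK.
rewrite /V -!natr1.
have -> : (n + d)%:R + 1 - (d%:R + 1) + 1 = (n + d)%:R - d%:R + 1 :> R by ring.
apply: Vstep; first exact: ler0n.
by rewrite ler_nat leq_addl.
Qed.


Lemma notcov (N M n k : nat) (c : R) : (0 < n)%N -> (0 < N)%N ->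
  ~~ covers N M n c k ->
  n%:R * c / N%:R < k%:R - n%:R * M%:R / N%:R \/ k%:R - n%:R * M%:R / N%:R < - (n%:R * c / N%:R).
Proof.
move=> n0 N0; rewrite /covers negb_and -!ltNge.
have nR : (0 : R) < n%:R by rewrite ltr0n.
have NR : (0 : R) < N%:R by rewrite ltr0n.
set z := k%:R - n%:R * M%:R / N%:R.
have kE : k%:R / n%:R * N%:R = z * (N%:R / n%:R) + M%:R.
  by rewrite /z; field; rewrite !gt_eqF.
have dE : n%:R * c / N%:R = c / (N%:R / n%:R) by field; rewrite !gt_eqF.
have r0 : 0 < N%:R / n%:R :> R by rewrite divr_gt0.
rewrite kE dE => /orP[h|h]; [left|right].
  by rewrite ltr_pdivrMr //; lra.
by rewrite -mulNr ltr_pdivlMr //; lra.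
Qed.

Lemma tail (N M n : nat) (c Vv t : R) : (0 < n)%N -> (n <= N)%N -> (M <= N)%N ->
  0 <= t ->
  (forall u, \sum_(0 <= k < n.+1) hyper_pmf R N M n k * expR (u * (k%:R - n%:R * M%:R / N%:R))
      <= expR (8^-1 * (u * u) * Vv)) ->
  1 - prob_covers N M n c <= 2 * expR (- (t * (n%:R * c / N%:R)) + 8^-1 * (t * t) * Vv).
Proof.
move=> n0 nN MN t0 Hmgf.
have N0 : (0 < N)%N by lia.
set d := n%:R * c / N%:R.
pose ctr : R := n%:R * M%:R / N%:R.
rewrite /prob_covers -(big_mkord xpredT (fun k => if covers N M n c k then hyper_pmf R N M n k else 0)).
rewrite -[X in X - _ <= _](sum_hyp nN MN) -sumrB.
apply: (@le_trans _ _ (\sum_(0 <= k < n.+1) hyper_pmf R N M n k *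
   (expR (t * (k%:R - ctr)) * expR (- (t * d)) + expR ((- t) * (k%:R - ctr)) * expR (- (t * d))))).
  apply: ler_sum_nat => k _.
  case: ifP => cov.
    rewrite subrr mulr_ge0 ?hyp_ge0 //.
  rewrite subr0 -[X in X <= _]mulr1 ler_wpM2l ?hyp_ge0 //.
  rewrite -!expRD.
  case: (notcov n0 N0 (negbT cov)) => h.
    apply: le_trans (_ : expR (t * (k%:R - ctr) + - (t * d)) <= _).
      rewrite -[X in X <= _]expR0 ler_expR -mulrBr mulr_ge0 //. rewrite /ctr /d; lra.
    by rewrite lerDl expR_ge0.
  apply: le_trans (_ : expR (- t * (k%:R - ctr) + - (t * d)) <= _).
    rewrite -[X in X <= _]expR0 ler_expR mulNr -opprD oppr_ge0 -mulrDr; apply: mulr_ge0_le0 => //.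
    rewrite /ctr /d; lra.
  by rewrite lerDr expR_ge0.
have Hs : \sum_(0 <= k < n.+1) hyper_pmf R N M n k *
   (expR (t * (k%:R - ctr)) * expR (- (t * d)) + expR ((- t) * (k%:R - ctr)) * expR (- (t * d)))
   = (\sum_(0 <= k < n.+1) hyper_pmf R N M n k * expR (t * (k%:R - ctr)) +
      \sum_(0 <= k < n.+1) hyper_pmf R N M n k * expR ((- t) * (k%:R - ctr))) * expR (- (t * d)).
  by rewrite -big_split big_distrl; apply: eq_big_nat => k _ /=; ring.
rewrite Hs.
have -> : 2 * expR (- (t * d) + 8^-1 * (t * t) * Vv) =
   (expR (8^-1 * (t * t) * Vv) + expR (8^-1 * (- t * - t) * Vv)) * expR (- (t * d)).
  by rewrite mulrNN expRD; ring.
rewrite ler_wpM2r ?expR_ge0 // lerD //.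
Qed.


Lemma alg1 (Nr n c y : R) : 0 < Nr -> 0 < n -> 0 < c -> 0 < y ->
  (Nr + 1) * ((Nr / c) ^+ 2) * y / (Nr + (Nr / c) ^+ 2 * y) <= n ->
  y * (n * (Nr - n + 1) / Nr) <= (n * c / Nr) ^+ 2.
Proof.
move=> N0 n0 c0 y0.
set x := (Nr / c) ^+ 2.
have x0 : 0 < x by rewrite exprn_gt0 // divr_gt0.
have xc : x * c ^+ 2 = Nr ^+ 2 by rewrite /x; field; rewrite gt_eqF.
have D0 : 0 < Nr + x * y by rewrite addr_gt0 // mulr_gt0.
rewrite ler_pdivrMr // => h.
have h2 : x * y * (Nr + 1 - n) <= n * Nr by nra.
have h3 : x * c ^+ 2 * y * (Nr + 1 - n) <= n * Nr * c ^+ 2.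
  have := ler_wpM2r (ltW (exprn_gt0 2 c0)) h2.
  by rewrite mulrAC [X in X <= _ -> _](_ : _ = x * c ^+ 2 * y * (Nr + 1 - n)) //; ring.
rewrite xc in h3.
have K : y * (Nr - n + 1) * Nr <= n * c ^+ 2.
  have : Nr * (y * (Nr - n + 1) * Nr) <= Nr * (n * c ^+ 2).
    by rewrite (_ : Nr * (y * (Nr - n + 1) * Nr) = Nr ^+ 2 * y * (Nr + 1 - n)); [lra | ring].
  by rewrite ler_pM2l.
have E1 : y * (n * (Nr - n + 1) / Nr) = (n / Nr ^+ 2) * (y * (Nr - n + 1) * Nr).
  by field; rewrite gt_eqF.
have E2 : (n * c / Nr) ^+ 2 = (n / Nr ^+ 2) * (n * c ^+ 2).
  by field; rewrite gt_eqF.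
rewrite E1 E2 ler_wpM2l //.
by rewrite divr_ge0 ?ltW // exprn_gt0.
Qed.


Lemma alg2 (Nr n c y : R) : 0 < Nr -> 0 < n -> 0 < c -> 0 < y ->
  (Nr - 1) * ((Nr / c) ^+ 2) * y / (2 * (Nr + (Nr / c) ^+ 2 * y)) +
  Num.Def.sqrtr (((Nr - 1) * ((Nr / c) ^+ 2) * y / (2 * (Nr + (Nr / c) ^+ 2 * y))) ^+ 2
     + Nr * ((Nr / c) ^+ 2) * y / (Nr + (Nr / c) ^+ 2 * y)) <= n ->
  y * ((Nr - n) * (Nr - (Nr - n) + 1) / Nr) <= (n * c / Nr) ^+ 2.
Proof.
move=> N0 n0 c0 y0.
set x := (Nr / c) ^+ 2.
set D := Nr + x * y.
set A := (Nr - 1) * x * y / (2 * D).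
set B := Nr * x * y / D.
have x0 : 0 < x by rewrite exprn_gt0 // divr_gt0.
have xc : x * c ^+ 2 = Nr ^+ 2 by rewrite /x; field; rewrite gt_eqF.
have D0 : 0 < D by rewrite addr_gt0 // mulr_gt0.
have B0 : 0 <= B.
  rewrite /B; apply: divr_ge0; last exact: ltW.
  by apply: mulr_ge0; [apply: mulr_ge0|]; exact: ltW.
have z0 : 0 <= A ^+ 2 + B by rewrite addr_ge0 // sqr_ge0.
move=> h.
have s0 := sqrtr_ge0 (A ^+ 2 + B).
have hs : Num.sqrt (A ^+ 2 + B) <= n - A by lra.
have hq : A ^+ 2 + B <= (n - A) ^+ 2.
  rewrite -(sqr_sqrtr z0) ler_pXn2r // ?nnegrE //; lra.
have hB : B <= n ^+ 2 - 2 * A * n by nra.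
have hB' : B * D <= (n ^+ 2 - 2 * A * n) * D by rewrite ler_wpM2r // ltW.
have E1 : B * D = Nr * x * y by rewrite /B; field; rewrite gt_eqF.
have E2 : (n ^+ 2 - 2 * A * n) * D = n ^+ 2 * D - n * ((Nr - 1) * x * y).
  by rewrite /A; field; rewrite gt_eqF.
rewrite E1 E2 /D in hB'.
have h2 : x * y * ((Nr - n) * (n + 1)) <= n ^+ 2 * Nr by nra.
have h3 : x * c ^+ 2 * y * ((Nr - n) * (n + 1)) <= n ^+ 2 * Nr * c ^+ 2.
  have := ler_wpM2r (ltW (exprn_gt0 2 c0)) h2.
  by rewrite [X in X <= _ -> _](_ : _ = x * c ^+ 2 * y * ((Nr - n) * (n + 1))) //; ring.
rewrite xc in h3.
have K : Nr * y * ((Nr - n) * (n + 1)) <= n ^+ 2 * c ^+ 2.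
  have : Nr * (Nr * y * ((Nr - n) * (n + 1))) <= Nr * (n ^+ 2 * c ^+ 2).
    by rewrite (_ : Nr * (Nr * y * ((Nr - n) * (n + 1))) = Nr ^+ 2 * y * ((Nr - n) * (n + 1))); [lra | ring].
  by rewrite ler_pM2l.
have E3 : y * ((Nr - n) * (Nr - (Nr - n) + 1) / Nr) = (Nr ^+ 2)^-1 * (Nr * y * ((Nr - n) * (n + 1))).
  by field; rewrite gt_eqF.
have E4 : (n * c / Nr) ^+ 2 = (Nr ^+ 2)^-1 * (n ^+ 2 * c ^+ 2).
  by field; rewrite gt_eqF.
rewrite E3 E4 ler_wpM2l //.
by rewrite invr_ge0 ltW // exprn_gt0.
Qed.

Lemma alg3 (Nr x y : R) : 0 <= Nr -> 0 <= x -> 0 <= y ->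
  Nr * x * y / (Nr + x * y) <=
  (Nr - 1) * x * y / (2 * (Nr + x * y)) +
  Num.Def.sqrtr (((Nr - 1) * x * y / (2 * (Nr + x * y))) ^+ 2 + Nr * x * y / (Nr + x * y)).
Proof.
move=> N0 x0 y0.
set D := Nr + x * y.
set A := (Nr - 1) * x * y / (2 * D).
set B := Nr * x * y / D.
have D0 : 0 <= D by rewrite addr_ge0 // mulr_ge0.
have B0 : 0 <= B by rewrite /B divr_ge0 // !mulr_ge0.
have s0 := sqrtr_ge0 (A ^+ 2 + B).
have [BA|AB] := lerP (B - A) 0.
  lra.
have key : 0 <= B * (1 + 2 * A - B).
  have [D00|Dp] := eqVneq D 0.
    by rewrite /B D00 invr0 mulr0 mul0r.
  have -> : 1 + 2 * A - B = Nr / D.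
    by rewrite /A /B /D; field; rewrite -/D Dp.
  by rewrite mulr_ge0 // divr_ge0.
have : B - A <= Num.sqrt (A ^+ 2 + B).
  apply: le_trans (ler_norm (B - A)) _; rewrite -sqrtr_sqr.
  rewrite ler_sqrt; last by rewrite addr_ge0 // sqr_ge0.
  nra.
lra.
Qed.


Lemma cov_N (N M : nat) (c : R) : (0 < N)%N -> (M <= N)%N -> 0 < c ->
  prob_covers N M N c = 1.
Proof.
move=> N0 MN c0.
rewrite /prob_covers -(big_mkord xpredT (fun k => if covers N M N c k then hyper_pmf R N M N k else 0)).
rewrite -(sum_hyp (leqnn N) MN).
apply: eq_big_nat => k /andP[_ kN].
have [->|kM] := eqVneq k M.
  suff -> : covers N M N c M by [].
  rewrite /covers divfK ?pnatr_eq0 -?lt0n //.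
  apply/andP; split; lra.
by rewrite hyp_diag //; case: ifP.
Qed.

Lemma final_bound (d Vv delta : R) : 0 < Vv -> 0 < delta ->
  - (1 / 2) * ln (delta / 2) * Vv <= d ^+ 2 ->
  2 * expR (- ((4 * d / Vv) * d) + 8^-1 * ((4 * d / Vv) * (4 * d / Vv)) * Vv) <= delta.
Proof.
move=> V0 dl0 h.
have -> : - ((4 * d / Vv) * d) + 8^-1 * ((4 * d / Vv) * (4 * d / Vv)) * Vv = - (2 * (d ^+ 2 / Vv)).
  by field; rewrite gt_eqF.
have h' : - (1 / 2) * ln (delta / 2) <= d ^+ 2 / Vv by rewrite ler_pdivlMr.
have : expR (- (2 * (d ^+ 2 / Vv))) <= expR (ln (delta / 2)).
  rewrite ler_expR; lra.
rewrite lnK ?posrE ?divr_gt0 // => H.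
have : 2 * expR (- (2 * (d ^+ 2 / Vv))) <= 2 * (delta / 2) by rewrite ler_pM2l.
move=> H2; apply: (le_trans H2); rewrite [X in X <= _]mulrC divfK //; exact: lexx.
Qed.

End S.

Theorem lemma8 (R : realType) (N M n : nat) (delta c : R) :
  (M <= N)%N -> (1 <= n)%N -> (n <= N)%N ->
  0 < delta -> delta < 1 -> 0 < c ->
  let x : R := (N%:R / c) ^+ 2 in
  let y : R := - (1 / 2) * ln (delta / 2) in
  let A : R := (N%:R - 1) * x * y / (2 * (N%:R + x * y)) in
  let S2 : R := A + Num.Def.sqrtr (A ^+ 2 + N%:R * x * y / (N%:R + x * y)) in
  ((((N%:R <= c ^+ 2 / y - 2) /\ ((N%:R + 1) * x * y / (N%:R + x * y) <= n%:R))
    \/ ((c ^+ 2 / y - 2 < N%:R) /\ (S2 <= n%:R))) ->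
     1 - delta <= prob_covers N M n c)
  /\ (N%:R * x * y / (N%:R + x * y) <= S2).
Proof.
move=> MN n1 nN d0 d1 c0 x y A S2.
have y0 : 0 < y.
  rewrite /y mulNr oppr_gt0 pmulr_rlt0 ?divr_gt0 //.
  by rewrite ln_lt0 // divr_gt0 //= ltr_pdivrMr //; lra.
have N0 : (0 < N)%N by lia.
have NR : (0 : R) < N%:R by rewrite ltr0n.
have nR : (0 : R) < n%:R by rewrite ltr0n.
split; last first.
  rewrite /S2 /A; apply: alg3; first exact: ler0n.
    by rewrite /x sqr_ge0.
  exact: ltW.
move=> H.
have [nEN|nltN] := eqVneq n N.
  subst n; rewrite cov_N //; lra.
set d := n%:R * c / N%:R.
have d0' : 0 <= d by rewrite /d divr_ge0 // mulr_ge0 // ltW.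
suff [Vv [V0 [hV hmgf]]] : exists Vv : R, 0 < Vv /\ y * Vv <= d ^+ 2 /\
    forall u, \sum_(0 <= k < n.+1) hyper_pmf R N M n k * expR (u * (k%:R - n%:R * M%:R / N%:R))
      <= expR (8^-1 * (u * u) * Vv).
  have t0 : 0 <= 4 * d / Vv by rewrite divr_ge0 ?mulr_ge0 // ltW.
  have := tail c n1 nN MN t0 hmgf.
  have := @final_bound R d Vv delta V0 d0 hV.
  rewrite -/d; lra.
case: H => [[_ h1]|[_ h2]].
  exists (V R n N); split.
    rewrite /V divr_gt0 // mulr_gt0 //.
    have : (n <= N)%N := nN.
    rewrite -(ler_nat R); lra.
  split; last by move=> u; exact: mgfA.
  rewrite /V /d; apply: alg1 => //.
have nN' : (n < N)%N by rewrite ltn_neqAle nltN.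
exists (V R (N - n) N); split.
  rewrite /V divr_gt0 // mulr_gt0 //.
    by rewrite ltr0n subn_gt0.
  rewrite natrB ?(ltnW nN') //; lra.
split.
  rewrite /V /d natrB ?(ltnW nN') //; apply: alg2 => //.
move=> u.
have MN' : (M <= n + (N - n))%N by rewrite subnKC.
have := @mgfB R (N - n) n M u n1 MN'.
by rewrite subnKC.
Qed.
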